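(* Consider the wireless network model described in the context. For any scheduling policy $\pi \in \Pi$ and every link $e \in E$, \[ \lim_{t \to \infty} \mathbb{E}\left[\frac{1}{t}\sum_{\tau=0}^{t-1} U_e(\tau) S_e(\tau) A_e(\tau)\right] = 1 . \]
   Context: A wireless network is a directed graph $G=(V,E)$ with finite link set $E$. Time is slotted, $t = 0,1,2,\dots$. A collection $\mathcal{A}$ of subsets of $E$ (feasible activation sets) is given. In each slot $t$ a scheduling policy chooses a set $m_t \in \mathcal{A}$; $U_e(t) = \mathbb{I}\{e \in m_t\} \in \{0,1\}$. The channel state $S_e(t) \in \{0,1\}$ of link $e$ is i.i.d. across time with $\gamma_e = \Pr[S_e(t) = 1] > 0$; a transmission on $e$ at time $t$ succeeds iff $U_e(t)S_e(t)=1$. The age of link $e$ evolves as $A_e(t+1) = 1 + A_e(t) - U_e(t)S_e(t)A_e(t)$ (so it resets to $1$ after a successful transmission and otherwise increases by $1$). The scheduler does not know the current channel state: $m_t$ is chosen (possibly randomly) as a function of the history $\mathcal{H}(t) = \{\mathbf{U}(\tau), \mathbf{A}(\tau') : 0 \le \tau < t,\ 0 \le \tau' \le t\}$, so $S_e(t)$ is independent of $U_e(t)$ and $A_e(t)$. The link activation frequency of a policy $\pi$ is $f_e(\pi) = \lim_{t\to\infty}\frac{1}{t}\sum_{\tau=0}^{t-1}\mathbb{I}\{e \in m_\tau, m_\tau \in \mathcal{A}\}$, and $\Pi$ denotes the class of such policies for which $f_e(\pi)$ exists and is positive for every $e \in E$. *)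

(* Defs.v *)
From HB Require Import structures.
From mathcomp Require Import all_boot all_order all_algebra.
From mathcomp Require Import all_classical all_reals all_analysis.

Set Implicit Arguments.
Unset Strict Implicit.
Unset Printing Implicit Defensive.

Import Order.TTheory GRing.Theory Num.Theory.
Local Open Scope ring_scope.

(* A_e(0) = a0 e;
   A_e(t+1) = 1 + A_e(t) - U_e(t) S_e(t) A_e(t)
            = 1 if e is activated and the channel is ON, A_e(t) + 1 otherwise. *)
Fixpoint age (Omega : Type) (E : finType) (a0 : E -> nat)
    (m : nat -> Omega -> {set E}) (S : E -> nat -> Omega -> bool)
    (e : E) (t : nat) (w : Omega) : nat :=
  match t with
  | 0 => a0 e
  | t'.+1 => if (e \in m t' w) && S e t' w then 1
             else (age a0 m S e t' w).+1
  end.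

(* The history H(t) together with the decision m_t:
   (m_tau, (A_e(tau))_e) for tau = 0..t.  It determines
   U(tau) for tau <= t and A(tau') for tau' <= t. *)
Definition hist (Omega : Type) (E : finType) (a0 : E -> nat)
    (m : nat -> Omega -> {set E}) (S : E -> nat -> Omega -> bool)
    (t : nat) (w : Omega) : seq ({set E} * {ffun E -> nat}) :=
  [seq (m tau w, [ffun e => age a0 m S e tau w]) | tau <- iota 0 t.+1].

Definition avg_reset_age (R : realType) (Omega : Type) (E : finType)
    (a0 : E -> nat) (m : nat -> Omega -> {set E})
    (S : E -> nat -> Omega -> bool) (e : E) (t : nat) (w : Omega) : R :=
  (t%:R)^-1 * \sum_(tau < t)
     (((e \in m tau w) && S e tau w)%:R * (age a0 m S e tau w)%:R).

Definition act_freq (R : realType) (Omega : Type) (E : finType)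
    (m : nat -> Omega -> {set E}) (e : E) (t : nat) (w : Omega) : R :=
  (t%:R)^-1 * \sum_(tau < t) (e \in m tau w)%:R.

(* Main.v *)
Require Import Defs.
From HB Require Import structures.
From mathcomp Require Import all_boot all_order all_algebra.
From mathcomp Require Import all_classical all_reals all_analysis.
From mathcomp Require Import zify ring lra.
From mathcomp Require Import measurable_realfun.
Import Order.TTheory GRing.Theory Num.Theory numFieldTopology.Exports numFieldNormedType.Exports.
Local Open Scope classical_set_scope.
Local Open Scope ring_scope.
Set Implicit Arguments.
Unset Strict Implicit.
Unset Printing Implicit Defensive.

Section Gen.
Context (d : measure_display) (Omega : measurableType d).

Definition lvl_meas (T : countType) (g : Omega -> T) :=
  forall x, measurable [set w | g w = x].

Lemma det_meas (T : countType) (g : Omega -> T) (A : set Omega) :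
  lvl_meas g -> (forall w w', g w = g w' -> A w -> A w') -> measurable A.
Proof.
move=> hg hA.
have -> : A = \bigcup_n [set w | A w /\ pickle (g w) = n].
  apply/seteqP; split=> [w Aw|w [n _ []]] //; by exists (pickle (g w)).
apply: bigcupT_measurable => n.
have [[w0 [Aw0 hw0]]|hn] := pselect (exists w0, A w0 /\ pickle (g w0) = n).
- have -> : [set w | A w /\ pickle (g w) = n] = [set w | g w = g w0].
    apply/seteqP; split=> w /=.
    + by move=> [_]; rewrite -hw0 => /(pcan_inj pickleK).
    + by move=> e; split; [exact: (hA w0 w (esym e) Aw0) | rewrite e].
  exact: hg.
- have -> : [set w | A w /\ pickle (g w) = n] = set0.
    by apply/seteqP; split=> w //= hw; apply: hn; exists w.
  exact: measurable0.
Qed.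

Lemma det_meas_fun (T : countType) (g : Omega -> T) d' (U : sigmaRingType d')
  (f : Omega -> U) :
  lvl_meas g -> (forall w w', g w = g w' -> f w = f w') -> measurable_fun setT f.
Proof.
move=> hg hf _ Y mY; rewrite setTI; apply: (det_meas hg) => w w' e /=.
by rewrite (hf _ _ e).
Qed.

Lemma lvl_pair (T1 T2 : countType) (g1 : Omega -> T1) (g2 : Omega -> T2) :
  lvl_meas g1 -> lvl_meas g2 -> lvl_meas (fun w => (g1 w, g2 w)).
Proof.
move=> h1 h2 [a b].
have -> : [set w | (g1 w, g2 w) = (a, b)] = [set w | g1 w = a] `&` [set w | g2 w = b].
  by apply/seteqP; split=> w /=; [case=> -> -> | case=> -> ->].
exact: measurableI.
Qed.

Lemma lvl_comp (T1 T2 : countType) (g : Omega -> T1) (F : T1 -> T2) :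
  lvl_meas g -> lvl_meas (fun w => F (g w)).
Proof. by move=> hg x; apply: (det_meas hg) => w w' /= ->. Qed.

Lemma lvl_cst (T : countType) (c : T) : lvl_meas (fun _ : Omega => c).
Proof.
move=> x; have [->|h] := eqVneq c x.
  by rewrite (_ : [set _ | _] = setT); [exact: measurableT | apply/seteqP].
rewrite (_ : [set _ | _] = set0); first exact: measurable0.
by apply/seteqP; split=> w //= /eqP; rewrite (negbTE h).
Qed.

Lemma lvl_map (I : Type) (T : countType) (g : I -> Omega -> T) (s : seq I) :
  (forall i, lvl_meas (g i)) -> lvl_meas (fun w => [seq g i w | i <- s]).
Proof.
move=> hg; elim: s => [|i s IH] /=; first exact: lvl_cst.
exact: (lvl_comp (fun p : T * seq T => p.1 :: p.2) (lvl_pair (hg i) IH)).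
Qed.

Lemma lvl_ffun (E : finType) (T : countType) (g : E -> Omega -> T) :
  (forall e, lvl_meas (g e)) -> lvl_meas (fun w => [ffun e => g e w]).
Proof.
move=> hg x.
have -> : [set w | [ffun e => g e w] = x] =
          [set w | [seq g e w | e <- enum E] = [seq x e | e <- enum E]].
  apply/seteqP; split=> w /=.
    by move=> <-; apply: eq_map => e; rewrite ffunE.
  move/eq_in_map => h; apply/ffunP => e; rewrite ffunE; apply: h.
  by rewrite mem_enum.
exact: (@lvl_map E T g (enum E) hg).
Qed.

Lemma lvl_bool (b : Omega -> bool) : measurable [set w | b w] -> lvl_meas b.
Proof.
move=> mb [].
  by rewrite (_ : [set _ | _] = [set w | b w]) //; apply/seteqP; split=> w /=.
rewrite (_ : [set _ | _] = ~` [set w | b w]); first exact: measurableC.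
apply/seteqP; split=> w /=; first by move=> ->.
by case: (b w).
Qed.

End Gen.

Lemma arith_key (R : realFieldType) (f d t t0 L M K ct c0 : R) :
 0 < f -> 0 < t0 -> 0 <= L -> 1 <= M -> t = t0 + L -> t < (L + 1) * M -> d * (4 * M) = f ->
 `|ct / t - f| <= d -> `|c0 / t0 - f| <= d -> (K + f) * (2 * M) < t * f -> K < ct - c0.
Proof.
move=> f0 t00 L0 M1 ht htM hd /ler_normlP [h1 h2] /ler_normlP [h3 h4] hK.
have t0' : 0 < t by lra.
have e1 : ct / t * t = ct by rewrite divfK // gt_eqF.
have e2 : c0 / t0 * t0 = c0 by rewrite divfK // gt_eqF.
have i1 : t * (f - d) <= ct.
  rewrite -e1 [X in X <= _]mulrC; apply: ler_wpM2r; lra.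
have i2 : c0 <= t0 * (f + d).
  rewrite -e2 [X in _ <= X]mulrC; apply: ler_wpM2r; lra.
have i3 : t * f < (L + 1) * M * f by rewrite ltr_pM2r.
have d0 : 0 <= d by nra.
have i4 : t0 * d <= t * d by apply: ler_wpM2r; lra.
have i5 : ct - c0 >= L * f - 2 * t * d.
  rewrite ht in i1 i4 *; nra.
apply: (lt_le_trans _ i5).
have M0 : 0 < 2 * M by lra.
rewrite -(ltr_pM2l M0).
have e3 : 2 * M * (L * f - 2 * t * d) = 2 * (M * L * f) - t * f.
  by rewrite -hd; ring.
rewrite e3; lra.
Qed.

Lemma nat_facts (T t L M : nat) : (2 <= M)%N -> (L * M <= t)%N -> ((2 * T).+2 <= t)%N ->
  [/\ (L <= t)%N, (T <= t - L)%N, (0 < t - L)%N & (0 < t)%N].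
Proof.
move=> M2 LM ht.
have L2 : (L * 2 <= t)%N by apply: leq_trans LM; rewrite leq_mul2l M2 orbT.
split; lia.
Qed.

Section Model.
Variables (d : measure_display) (Omega : measurableType d)
  (R : realType) (P : probability Omega R)
  (E : finType) (m : nat -> Omega -> {set E}) (S : E -> nat -> Omega -> bool)
  (gamma : E -> R) (a0 : E -> nat).
Hypothesis hm_meas : forall t (B : {set E}), measurable [set w | m t w = B].
Hypothesis hS_meas : forall e t, measurable [set w | S e t w].
Hypothesis hindep : forall e t h,
     P ([set w | S e t w] `&` [set w | hist a0 m S t w = h]) =
     ((gamma e)%:E * P [set w | hist a0 m S t w = h])%E.

Local Notation age := (age a0 m S).
Local Notation hist := (hist a0 m S).

Lemma lvl_age e t : lvl_meas (age e t).
Proof.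
elim: t => [|t IH] /=; first exact: lvl_cst.
exact: (lvl_comp (fun p : {set E} * bool * nat =>
   if (e \in p.1.1) && p.1.2 then 1%N else p.2.+1)
   (lvl_pair (lvl_pair (hm_meas t) (lvl_bool (hS_meas e t))) IH)).
Qed.

Lemma lvl_hist s : lvl_meas (hist s).
Proof.
apply: (@lvl_map _ _ nat _ (fun tau w => (m tau w, [ffun e => age e tau w]))).
move=> tau; apply: lvl_pair; first exact: hm_meas.
by apply: lvl_ffun => e; exact: lvl_age.
Qed.

Lemma hist_eq s w w' : hist s w = hist s w' -> forall tau, (tau <= s)%N ->
  m tau w = m tau w' /\ forall e, age e tau w = age e tau w'.
Proof.
move=> h tau ht.
have := congr1 (fun l => nth (m 0%N w, [ffun=> 0%N]) l tau) h.
rewrite /Defs.hist !(nth_map 0%N) ?size_iota ?ltnS // nth_iota ?ltnS // add0n.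
case=> -> hf; split=> // e.
by have := congr1 (fun f : {ffun E -> nat} => f e) hf; rewrite !ffunE.
Qed.

Definition hdet s (A : set Omega) :=
  forall w w', hist s w = hist s w' -> A w -> A w'.

Lemma hdet_meas s A : hdet s A -> measurable A.
Proof. exact: (det_meas (lvl_hist s)). Qed.

Lemma indepS e s (A : set Omega) : hdet s A ->
  P (A `&` [set w | S e s w]) = ((gamma e)%:E * P A)%E.
Proof.
move=> hA.
pose B n := [set w | A w /\ pickle (hist s w) = n].
have AB : A = \bigcup_n B n.
  by apply/seteqP; split=> [w Aw|w [n _ []]] //; exists (pickle (hist s w)).
have mB n : measurable (B n).
  apply: (hdet_meas (s := s)) => w w' e' [Aw hw]; split; first exact: hA e' Aw.
  by rewrite -e'.
have tB : trivIset setT B.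
  by move=> i j _ _ [w [[_ hi] [_ hj]]]; rewrite -hi -hj.
have BS n : P (B n `&` [set w | S e s w]) = ((gamma e)%:E * P (B n))%E.
  have [[w0 [Aw0 hw0]]|hn] := pselect (exists w0, B n w0).
  - have -> : B n = [set w | hist s w = hist s w0].
      apply/seteqP; split=> w /=.
      + by move=> [_]; rewrite -hw0 => /(pcan_inj pickleK).
      + by move=> ew; split; [exact: (hA w0 w (esym ew) Aw0) | rewrite ew].
    by rewrite setIC hindep.
  - have -> : B n = set0.
      by apply/seteqP; split=> w //= hw; apply: hn; exists w.
    by rewrite set0I measure0 mule0.
have -> : A `&` [set w | S e s w] = \bigcup_n (B n `&` [set w | S e s w]).
  by rewrite {1}AB setI_bigcupl.
have -> : P A = P (\bigcup_n B n) by rewrite {1}AB.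
rewrite (measure_bigcup P setT (fun n => B n `&` [set w | S e s w]));
  [|by move=> i _; apply: measurableI => //; exact: hS_meas|exact: trivIset_setIr].
rewrite (measure_bigcup P setT B) //.
by rewrite (eq_eseriesr (fun i _ => BS i)) nneseriesZl.
Qed.

Lemma PfinK (A : set Omega) : measurable A -> P A = (fine (P A))%:E.
Proof. by move=> mA; rewrite fineK //; exact: fin_num_measure. Qed.

Lemma PT : P setT = 1%E.
Proof. exact: probability_setT. Qed.

Lemma Ple (A B : set Omega) : measurable A -> measurable B -> A `<=` B -> (P A <= P B)%E.
Proof. by move=> mA mB AB; apply: le_measure => //; rewrite inE. Qed.

Lemma PU2 (A B : set Omega) : measurable A -> measurable B -> (P (A `|` B) <= P A + P B)%E.
Proof. by move=> mA mB; exact: measureU2. Qed.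

Lemma PC (A : set Omega) : measurable A -> P (~` A) = (1 - P A)%E.
Proof. by move=> mA; exact: probability_setC. Qed.

Lemma PbigU (F : nat -> set Omega) n : (forall i, measurable (F i)) ->
  trivIset setT F -> P (\big[setU/set0]_(i < n) F i) = (\sum_(i < n) P (F i))%E.
Proof. by move=> mF tF; exact: measure_bigsetU. Qed.

Section Link.
Variable e : E.
Hypothesis hg1 : gamma e <= 1.

Lemma indepNS s (A : set Omega) : hdet s A ->
  P (A `&` ~` [set w | S e s w]) = ((1 - gamma e)%:E * P A)%E.
Proof.
move=> hA; have mA := hdet_meas hA.
rewrite -setDE (@measureD _ _ _ P A _ mA (hS_meas e s)); last first.
  by rewrite -(fineK (fin_num_measure P A mA)) ltry.
rewrite -[X in (_ - X)%E]/(P (A `&` [set w | S e s w])) (indepS e hA).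
rewrite -[X in (X - _)%E]/(P A) (PfinK mA).
by rewrite -EFinM -EFinB -EFinM mulrBl mul1r.
Qed.

Definition U i w := e \in m i w.
Definition succ i w := (e \in m i w) && S e i w.
Definition Xc t0 tau w := (\sum_(t0 <= i < tau) (U i w : nat))%N.
Definition NS t0 tau w := forall i, (t0 <= i < tau)%N -> ~~ succ i w.
Definition D t0 j tau := [set w | (t0 <= tau)%N /\ NS t0 tau w /\ Xc t0 tau w = j /\ U tau w].

Lemma age_ge1 i w : (0 < i)%N -> (0 < age e i w)%N.
Proof. by case: i => [//|i] _ /=; case: ifP. Qed.

Lemma succ_age i w : (0 < i)%N -> succ i w = U i w && (age e i.+1 w == 1%N).
Proof.
move=> hi; rewrite /succ /U /=.
case: (e \in m i w) => //=; case: (S e i w) => //=.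
by rewrite eqSS; have := age_ge1 w hi; case: (age e i w).
Qed.

Lemma Xc_step t0 tau w : (t0 <= tau)%N -> Xc t0 tau.+1 w = (Xc t0 tau w + U tau w)%N.
Proof. by move=> h; rewrite /Xc big_nat_recr. Qed.

Lemma Xc0 t0 w : Xc t0 t0 w = 0%N.
Proof. by rewrite /Xc big_geq. Qed.

Lemma Xc_mono t0 a b w : (t0 <= a)%N -> (a <= b)%N -> (Xc t0 a w <= Xc t0 b w)%N.
Proof. by move=> h1 h2; rewrite /Xc (@big_cat_nat _ _ _ a t0 b) //= leq_addr. Qed.

Lemma Xc_ex t0 w k j : (j < Xc t0 (t0 + k) w)%N ->
  exists tau, [/\ (t0 <= tau < t0 + k)%N, Xc t0 tau w = j & U tau w].
Proof.
elim: k => [|k IH]; first by rewrite addn0 Xc0.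
rewrite addnS Xc_step ?leq_addr //.
case: (ltnP j (Xc t0 (t0 + k) w)) => h.
  move=> _; have [tau [/andP[h1 h2] h3 h4]] := IH h.
  by exists tau; split => //; apply/andP; split => //; lia.
case hU: (U (t0 + k) w) => /= h'; last by lia.
exists (t0 + k)%N; split; [apply/andP; split; lia | lia | exact: hU].
Qed.

Lemma D_triv t0 j : trivIset setT (D t0 j).
Proof.
apply: ltn_trivIset => n k kn; apply/seteqP; split=> // w [[h0 [_ [hX hU]]] [_ [_ [hX' _]]]].
have := @Xc_mono t0 k.+1 n w (leqW h0) kn; rewrite Xc_step // hU hX hX'; lia.
Qed.

Lemma D_hdet t0 j tau : (0 < t0)%N -> hdet tau (D t0 j tau).
Proof.
move=> ht0 w w' h [h0 [hN [hX hU]]].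
have hm i : (i <= tau)%N -> U i w = U i w'.
  by move=> hi; rewrite /U (hist_eq h hi).1.
split => //; split; [|split].
- move=> i /andP[h1 h2]; have := hN i; rewrite !succ_age; try lia.
  rewrite hm; last by lia.
  by rewrite (hist_eq h (_ : i.+1 <= tau)%N).2; [apply; apply/andP|].
- by rewrite -hX /Xc; apply: eq_big_nat => i /andP[_ hi]; rewrite hm //; lia.
- by rewrite -hm.
Qed.

Lemma D_meas t0 j tau : (0 < t0)%N -> measurable (D t0 j tau).
Proof. by move=> h; apply: hdet_meas; exact: D_hdet. Qed.

Lemma window t0 j s : (0 < t0)%N ->
  (P (\big[setU/set0]_(tau < s) D t0 j tau) <= ((1 - gamma e) ^+ j)%:E)%E.
Proof.
move=> ht0; elim: j => [|j IH].
  by rewrite expr0; apply: probability_le1; apply: bigsetU_measurable => i _; exact: D_meas.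
have sub : \bigcup_(tau < s) D t0 j.+1 tau `<=`
           \bigcup_(tau < s) (D t0 j tau `&` ~` [set w | S e tau w]).
  move=> w [tau' /= lt [h0 [hN [hX hU]]]].
  have := @Xc_ex t0 w (tau' - t0) j; rewrite subnKC // hX ltnSn.
  move=> /(_ isT) [tau [/andP[h1 h2] h3 h4]].
  exists tau; first by rewrite /=; lia.
  split; last first.
    move=> /= hS; have hc : (t0 <= tau < tau')%N by lia.
    by have := hN tau hc; rewrite /succ -/(U tau w) h4 hS.
  split => //; split => //; move=> i /andP[i1 i2]; apply: hN; lia.
move: sub; rewrite !bigcup_mkord => sub.
have mF i : measurable (D t0 j i `&` ~` [set w | S e i w]).
  by apply: measurableI; [exact: D_meas | apply: measurableC; exact: hS_meas].
apply: (@le_trans _ _ (P (\big[setU/set0]_(i < s) (D t0 j i `&` ~` [set w | S e i w])))).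
  apply: le_measure sub; rewrite inE.
  - by apply: bigsetU_measurable => i _; exact: D_meas.
  - by apply: bigsetU_measurable => i _; exact: mF.
rewrite (@PbigU (fun i => D t0 j i `&` ~` [set w | S e i w]));
  [|exact: mF|]; last first.
  move=> i k _ _ [w [[a _] [b _]]]; have T := @D_triv t0 j.
  by apply: (T i k I I); exists w.
rewrite (eq_bigr (fun i : 'I_s => ((1 - gamma e)%:E * P (D t0 j i))%E)); last first.
  by move=> i _; rewrite indepNS //; exact: D_hdet.
rewrite -ge0_sume_distrr; last by move=> i _; exact: measure_ge0.
rewrite -(@PbigU (D t0 j)); [|by move=> i; exact: D_meas|exact: D_triv].
rewrite exprS EFinM; apply: lee_wpmul2l => //.
by rewrite lee_fin subr_ge0.
Qed.

Lemma sum_id t w :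
  (\sum_(tau < t) (succ tau w * age e tau w) + age e t w = t + a0 e)%N.
Proof.
elim: t => [|t IH]; first by rewrite big_ord0.
rewrite big_ord_recr /=; move: IH; rewrite /succ.
by case: ((e \in m t w) && S e t w) => /= IH; lia.
Qed.

Lemma avg_eq t w : avg_reset_age R a0 m S e t w =
  (t%:R)^-1 * ((t + a0 e)%:R - (age e t w)%:R).
Proof.
rewrite /avg_reset_age; congr (_ * _).
rewrite -(sum_id t w) natrD addrK natr_sum; apply: eq_bigr => i _.
by rewrite natrM.
Qed.

Lemma age_le t w : (age e t w <= t + a0 e)%N.
Proof. by rewrite -(sum_id t w) leq_addl. Qed.

Lemma age_step t w : (age e t.+1 w <= (age e t w).+1)%N.
Proof. by rewrite /=; case: ifP. Qed.

Lemma age_after i k w : succ i w -> (age e (i.+1 + k) w <= k.+1)%N.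
Proof.
move=> hs; elim: k => [|k IH].
  by rewrite addn0 /=; move: hs; rewrite /succ => ->.
by rewrite addnS; apply: (leq_trans (age_step _ _)).
Qed.

Lemma NS_of_age t0 t w : (t - t0 < age e t w)%N -> NS t0 t w.
Proof.
move=> h i /andP[h1 h2]; apply/negP => hs.
have := age_after (t - i.+1) hs; rewrite subnKC //; lia.
Qed.

Definition cnt s w := (\sum_(0 <= tau < s) (U tau w : nat))%N.

Lemma freq_eq s w : act_freq R m e s w = (s%:R)^-1 * (cnt s w)%:R.
Proof. by rewrite /act_freq /cnt big_mkord natr_sum. Qed.

Lemma cnt_split t0 t w : (t0 <= t)%N -> cnt t w = (cnt t0 w + Xc t0 t w)%N.
Proof.
by move=> h; rewrite /cnt /Xc (@big_cat_nat _ _ _ t0 0 t).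
Qed.

Lemma G_hdet t L : hdet t [set w | (age e t w <= L)%N].
Proof. by move=> w w' h /=; rewrite (hist_eq h (leqnn t)).2. Qed.

Lemma freq_det s w w' : hist s w = hist s w' -> act_freq R m e s w = act_freq R m e s w'.
Proof.
move=> h; rewrite !freq_eq /cnt; congr (_ * (_ %:R)); apply: eq_big_nat => i /andP[_ hi].
by rewrite /U (hist_eq h (ltnW hi)).1.
Qed.

Lemma avg_det t w w' : hist t w = hist t w' ->
  avg_reset_age R a0 m S e t w = avg_reset_age R a0 m S e t w'.
Proof. by move=> h; rewrite !avg_eq (hist_eq h (leqnn t)).2. Qed.

Lemma Un_of t0 K t w : (t0 <= t)%N -> NS t0 t w -> (K < Xc t0 t w)%N ->
  (\big[setU/set0]_(tau < t) D t0 K tau) w.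
Proof.
move=> h0 hN hX; rewrite -bigcup_mkord.
have := @Xc_ex t0 w (t - t0) K; rewrite subnKC // => /(_ hX) [tau [/andP[h1 h2] h3 h4]].
exists tau => /=; first lia.
split => //; split => //; move=> i /andP[i1 i2]; apply: hN; lia.
Qed.

Lemma main (hg0 : 0 < gamma e) (f : R) (hf : 0 < f)
  (hae : {ae P, forall w, (fun t : nat => act_freq R m e t w : R^o) @ \oo --> f}) :
  (fun t : nat => 'E_P[avg_reset_age R a0 m S e t]%E) @ \oo --> (1%:E)%E.
Proof.
pose avg t := avg_reset_age R a0 m S e t.
pose q := 1 - gamma e.
have q0 : 0 <= q by rewrite subr_ge0.
have q1 : q < 1 by rewrite /q; lra.
have avg_ge0 t w : 0 <= avg t w.
  by rewrite /avg avg_eq mulr_ge0 // ?invr_ge0 // subr_ge0 ler_nat; exact: age_le.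
have mavg t : measurable_fun setT (fun w => (avg t w)%:E).
  by apply: (det_meas_fun (lvl_hist t)) => w w' h; rewrite /avg (avg_det h).
have Eexp t : ('E_P[avg t])%E = (\int[P]_w (avg t w)%:E)%E by rewrite unlock.
have Ege0 t : (0 <= 'E_P[avg t])%E.
  by rewrite Eexp; apply: integral_ge0 => w _; rewrite lee_fin.
have Ele t : (0 < t)%N -> ('E_P[avg t] <= (1 + (a0 e)%:R / t%:R)%:E)%E.
  move=> t0; rewrite Eexp.
  apply: (@le_trans _ _ (\int[P]_w (cst (1 + (a0 e)%:R / t%:R)%:E w))%E).
    apply: ge0_le_integral.
    - exact: measurableT.
    - by move=> w _; rewrite lee_fin.
    - exact: mavg.
    - exact: measurable_cst.
    - move=> w _; rewrite lee_fin /avg avg_eq natrD mulrBr mulrDr mulVf; last first.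
        by rewrite pnatr_eq0 -lt0n.
      rewrite [_ / _]mulrC lerBlDr lerDl mulr_ge0 // invr_ge0 //.
  by rewrite integral_cst // -[X in (_ * X)%E]/(P setT) PT mule1.
have Elow (eta : R) : 0 < eta ->
    exists N, forall t, (N <= t)%N -> ((1 - eta)%:E <= 'E_P[avg t])%E.
  move=> eta0.
  pose M := (Num.truncn (2 / eta)).+2.
  have M2 : (2 <= M)%N by [].
  have hM : 2 / eta < M%:R.
    apply: (lt_le_trans (truncnS_gt _)); rewrite ler_nat; exact: leqnSn.
  clearbody M.
  have M0 : 0 < M%:R :> R by rewrite ltr0n; exact: leq_trans _ M2.
  have hMe : (M%:R)^-1 <= eta / 2 :> R.
    have h2 : 2 < M%:R * eta by rewrite -ltr_pdivrMr.
    rewrite -[leLHS]mul1r ler_pdivrMr //; lra.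
  have [K hK] : exists K, q ^+ K <= eta / 4.
    have := @cvg_expr R q; rewrite ger0_norm // => /(_ q1).
    move/cvgrPdist_le => /(_ (eta / 4)) [|N _ hN]; first lra.
    exists N; have := hN N (leqnn N) => /=.
    by rewrite sub0r normrN ger0_norm ?exprn_ge0.
  pose dl := f / (4 * M%:R).
  have dl0 : 0 < dl by rewrite /dl divr_gt0 //; lra.
  pose Bad T := \bigcup_s [set w | (T <= s)%N /\ dl < `|act_freq R m e s w - f|].
  have mBad T : measurable (Bad T).
    apply: bigcupT_measurable => s; apply: (hdet_meas (s := s)).
    by move=> w w' h [h1 h2]; split => //; rewrite -(freq_det h).
  have [N0 [mN0 PN0 sN0]] := hae.
  have capB : \bigcap_T Bad T `<=` N0.
    move=> w hw; apply: sN0 => /= hc.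
    move: hc => /cvgrPdist_lt /(_ dl dl0) [T _ hT].
    have [s _ [hTs hs]] := hw T I.
    have := hT s hTs => /=; rewrite distrC; lra.
  have P0 : P (\bigcap_T Bad T) = 0%E.
    apply/eqP; rewrite eq_le measure_ge0 andbT -PN0; apply: le_measure capB.
    - by rewrite inE; apply: bigcapT_measurable => T; exact: mBad.
    - by rewrite inE.
  have cvB : (P \o Bad) x @[x --> \oo] --> P (\bigcap_T Bad T).
    apply: nonincreasing_cvg_mu.
    - by rewrite -[X in (X < _)%E]/(P (Bad 0%N)) (PfinK (mBad 0%N)) ltry.
    - exact: mBad.
    - by apply: bigcapT_measurable => T; exact: mBad.
    - move=> a b ab; apply/subsetPset => w [s _ [h1 h2]]; exists s => //; split => //.
      exact: leq_trans ab h1.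
  rewrite P0 in cvB.
  have [T hT] : exists T, (P (Bad T) <= (eta / 4)%:E)%E.
    move/fine_cvgP : cvB => [_ /cvgrPdist_le /(_ (eta / 4)) [|T _ hT]]; first lra.
    exists T; have := hT T (leqnn T) => /=; rewrite sub0r normrN.
    rewrite (PfinK (mBad T)) lee_fin => h; exact: le_trans (ler_norm _) h.
  pose c := (K%:R + f) * (2 * M%:R) / f.
  exists (maxn (2 * T).+2 (Num.truncn c).+1) => t.
  rewrite geq_max => /andP[ht1 ht2].
  have hc : c < t%:R.
    by apply: (lt_le_trans (truncnS_gt c)); rewrite ler_nat.
  clear ht2.
  pose L := (t %/ M)%N.
  pose t0 := (t - L)%N.
  have LM : (L * M <= t)%N by exact: leq_trunc_div.
  have tLM : (t < L.+1 * M)%N by apply: ltn_ceil; exact: leq_trans _ M2.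
  clearbody L.
  have [hLt ht0T ht00 htpos] := nat_facts M2 LM ht1.
  rewrite -/t0 in ht0T ht00.
  have t0t : (t0 <= t)%N by rewrite /t0 leq_subr.
  pose G := [set w | (age e t w <= L)%N].
  have mG : measurable G by apply: (hdet_meas (s := t)); exact: G_hdet.
  pose Un := \big[setU/set0]_(tau < t) D t0 K tau.
  have mUn : measurable Un by apply: bigsetU_measurable => i _; exact: D_meas.
  have subC : ~` G `<=` Bad T `|` Un.
    move=> w /= hG.
    have [hb|hb] := pselect (Bad T w); [by left|right].
    have hfr s : (T <= s)%N -> `|act_freq R m e s w - f| <= dl.
      move=> hs; rewrite leNgt; apply/negP => h; apply: hb; exists s => //.
    apply: Un_of => //.
      by apply: NS_of_age; rewrite /t0 subKn // ltnNge; apply/negP.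
    have ft := hfr t (leq_trans ht0T t0t).
    have f0 := hfr t0 ht0T.
    rewrite !freq_eq [_^-1 * _]mulrC in ft.
    rewrite !freq_eq [_^-1 * _]mulrC in f0.
    have hs := cnt_split w t0t.
    rewrite -(@ltr_nat R).
    have -> : (Xc t0 t w)%:R = (cnt t w)%:R - (cnt t0 w)%:R :> R.
      by rewrite hs natrD addrC addKr.
    apply: (@arith_key R f dl t%:R t0%:R L%:R M%:R K%:R (cnt t w)%:R (cnt t0 w)%:R hf _ _ _ _ _ _ ft f0).
    - by rewrite ltr0n.
    - exact: ler0n.
    - by rewrite ler1n; exact: leq_trans _ M2.
    - by rewrite -natrD /t0 subnK.
    - by rewrite natr1 -natrM ltr_nat.
    - by rewrite /dl divfK // mulf_neq0 // gt_eqF.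
    - by rewrite /c ltr_pdivrMr // in hc.
  have PUn : (P Un <= (q ^+ K)%:E)%E by exact: window.
  have PCG : (P (~` G) <= (eta / 2)%:E)%E.
    apply: (le_trans (Ple _ _ subC)); [exact: measurableC | exact: measurableU|].
    apply: (le_trans (PU2 (mBad T) mUn)).
    apply: (le_trans (leeD hT PUn)); rewrite -EFinD lee_fin; lra.
  rewrite (PC mG) (PfinK mG) in PCG.
  set pG := fine (P G) in PCG.
  have hpG : 1 - eta / 2 <= pG by move: PCG; rewrite -EFinB lee_fin; lra.
  have iG w : \1_G w = ((age e t w <= L)%N)%:R :> R.
    rewrite /indic; case: (boolP (age e t w <= L)%N) => h.
      by rewrite mem_set.
    by rewrite memNset //= => h'; rewrite h' in h.
  have kM : 0 <= 1 - (M%:R)^-1 :> R.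
    rewrite subr_ge0 invf_le1 // ler1n; exact: leq_trans _ M2.
  have mf1 : measurable_fun setT (fun w => (\1_G w)%:E : \bar R).
    apply: (det_meas_fun (lvl_hist t)) => w w' h.
    by rewrite !iG (hist_eq h (leqnn t)).2.
  rewrite Eexp.
  apply: (@le_trans _ _ (\int[P]_w ((1 - (M%:R)^-1)%:E * (\1_G w)%:E))%E).
    rewrite ge0_integralZl_EFin //.
    rewrite integral_indic // setIT -[X in (_ * X)%E]/(P G) (PfinK mG) -/pG -EFinM lee_fin.
    have h1 : 0 <= (1 - (M%:R)^-1) * (pG - (1 - eta / 2)) by apply: mulr_ge0; lra.
    have h2 : 0 <= (M%:R)^-1 * (eta / 2) :> R.
      by apply: mulr_ge0; [rewrite invr_ge0; lra | lra].
    lra.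
  apply: ge0_le_integral.
  - exact: measurableT.
  - by move=> w _; apply: mule_ge0; rewrite lee_fin.
  - apply: (det_meas_fun (lvl_hist t)) => w w' h.
    by rewrite !iG (hist_eq h (leqnn t)).2.
  - exact: mavg.
  move=> w _; rewrite iG -EFinM lee_fin.
  case: (boolP (age e t w <= L)%N) => hw; last by rewrite mulr0.
  rewrite mulr1 /avg avg_eq.
  have tR : 0 < t%:R :> R by rewrite ltr0n.
  have e1 : (t%:R)^-1 * (t%:R - L%:R) = 1 - L%:R / t%:R :> R.
    by rewrite mulrBr mulVf ?gt_eqF // mulrC.
  have i1 : (t%:R)^-1 * (t%:R - L%:R) <= (t%:R)^-1 * ((t + a0 e)%:R - (age e t w)%:R) :> R.
    apply: ler_wpM2l; first by rewrite invr_ge0 ltW.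
    rewrite natrD; have : (age e t w)%:R <= L%:R :> R by rewrite ler_nat.
    have : 0 <= (a0 e)%:R :> R by exact: ler0n.
    lra.
  have i2 : L%:R / t%:R <= (M%:R)^-1 :> R.
    by rewrite ler_pdivrMr // mulrC ler_pdivlMr // -natrM ler_nat.
  lra.
have Efin t : (0 < t)%N -> ('E_P[avg t])%E \is a fin_num.
  move=> ht; rewrite ge0_fin_numE ?Ege0 //.
  exact: le_lt_trans (Ele t ht) (ltry _).
apply/fine_cvgP; split.
  by exists 1%N => // t /= ht; exact: Efin.
apply/cvgrPdist_le => eta eta0.
have [N1 hN1] := Elow eta eta0.
pose N2 := (Num.truncn ((a0 e)%:R / eta)).+1.
exists (maxn (maxn N1 N2) 1) => // t /=; rewrite !geq_max => /andP[/andP[h1 h2] h3].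
have hE := Ele t h3; have hL := hN1 t h1.
rewrite -(fineK (Efin t h3)) lee_fin in hE.
rewrite -(fineK (Efin t h3)) lee_fin in hL.
have tR : 0 < t%:R :> R by rewrite ltr0n.
have ha : (a0 e)%:R / t%:R <= eta :> R.
  rewrite ler_pdivrMr // -ler_pdivrMl //.
  rewrite mulrC; apply: ltW; apply: (lt_le_trans (truncnS_gt _)); rewrite ler_nat; exact: h2.
rewrite ler_norml; apply/andP; split; rewrite /= -/(avg t); lra.
Qed.

End Link.

End Model.

Theorem lemma1 (d : measure_display) (Omega : measurableType d)
  (R : realType) (P : probability Omega R)
  (E : finType) (feas : {set {set E}})
  (m : nat -> Omega -> {set E}) (S : E -> nat -> Omega -> bool)
  (gamma : E -> R) (a0 : E -> nat) (f : E -> R)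
  (* feasible activation sets *)
  (hfeas : forall t w, m t w \in feas)
  (* measurability of the schedule and the channel states *)
  (hm_meas : forall t (B : {set E}), measurable [set w | m t w = B])
  (hS_meas : forall e t, measurable [set w | S e t w])
  (* channel: for each link, (S_e(t))_t i.i.d. Bernoulli(gamma_e), gamma_e > 0 *)
  (hgamma : forall e, 0 < gamma e)
  (hiid : forall e (n : nat) (b : nat -> bool),
     P [set w | forall tau, (tau < n)%N -> S e tau w = b tau] =
     (\prod_(tau < n) (if b tau then gamma e else 1 - gamma e))%:E)
  (* the scheduler does not know the current channel state:
     S_e(t) is independent of (H(t), m_t) *)
  (hindep : forall e t h,
     P ([set w | S e t w] `&` [set w | hist a0 m S t w = h]) =
     ((gamma e)%:E * P [set w | hist a0 m S t w = h])%E)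
  (* pi in Pi: link activation frequencies exist and are positive *)
  (hfreq : forall e, 0 < f e /\
     {ae P, forall w, (fun t : nat => act_freq R m e t w : R^o) @ \oo --> f e}) :
  forall e : E,
    (fun t : nat => 'E_P[avg_reset_age R a0 m S e t]%E) @ \oo --> (1%:E)%E.
Proof.
move=> e.
have hg1 : gamma e <= 1.
  have h := hiid e 1%N (fun _ => true); rewrite big_ord1 in h.
  have hs : [set w | forall tau, (tau < 1)%N -> S e tau w = true] = [set w | S e 0%N w].
    apply/seteqP; split => w /=; first by move/(_ 0%N isT).
    by move=> h0 [|//] _.
  rewrite hs in h.
  have := probability_le1 P (hS_meas e 0%N).
  by rewrite -[X in (X <= _)%E]/(P [set w | S e 0%N w]) h lee_fin.
exact: (main hm_meas hS_meas hindep hg1 (hgamma e) (hfreq e).1 (hfreq e).2).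
Qed.
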